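(* Let $T_{n,k}=\left[\begin{array}{cc|c}\alpha,&\beta&\gamma\\ \alpha',&\beta'&\gamma'\end{array}\right]_{n,k}$ be a GKP triangle with EGF $G(t,z)$. (i) If $\gamma=0$ and $\gamma'\neq0$, then the left-trimmed triangle $T^*_{n,k}:=(\gamma')^{-1}T_{n+1,k+1}$, $0\le k\le n$, is the GKP triangle $\left[\begin{array}{cc|c}\alpha,&\beta&\alpha+\beta\\ \alpha',&\beta'&\alpha'+\beta'+\gamma'\end{array}\right]_{n,k}$, and its EGF equals $(\gamma')^{-1}\,\frac{1}{t}\,\frac{\partial G}{\partial z}(t,z)$. (ii) If $\gamma'=0$ and $\gamma\neq0$, then the right-trimmed triangle $T^*_{n,k}:=\gamma^{-1}T_{n+1,k}$, $0\le k\le n$, is the GKP triangle $\left[\begin{array}{cc|c}\alpha,&\beta&\alpha+\gamma\\ \alpha',&\beta'&\alpha'\end{array}\right]_{n,k}$, and its EGF equals $\gamma^{-1}\frac{\partial G}{\partial z}(t,z)$.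
   Context: GKP triangle: for complex parameters $\alpha,\beta,\gamma,\alpha',\beta',\gamma'$, the array $T_{n,k}=\left[\begin{array}{cc|c}\alpha,&\beta&\gamma\\ \alpha',&\beta'&\gamma'\end{array}\right]_{n,k}$ ($n,k\in\mathbb Z$) is defined by $T_{0,0}=1$, $T_{n,k}=0$ if $n<0$, $k<0$ or $k>n$, and $T_{n+1,k+1}=[\alpha n+\beta(k+1)+\gamma]\,T_{n,k+1}+[\alpha' n+\beta' k+\gamma']\,T_{n,k}$ for all $n\ge0$ and all integers $k$. Its $n$th row polynomial is $G_n(t)=\sum_{k=0}^n T_{n,k}t^k$ and its (bivariate exponential generating function) EGF is $G(t,z)=\sum_{n\ge0}G_n(t)\,z^n/n!$. *)

(* Defs.v *)
From HB Require Import structures.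
From mathcomp Require Import all_boot all_order all_algebra.
Set Implicit Arguments. Unset Strict Implicit. Unset Printing Implicit Defensive.
Import Order.TTheory GRing.Theory Num.Theory.
Local Open Scope ring_scope.

(* Entries with k < 0 are 0 by definition and are not represented; the
   k = -1 instance of the recurrence gives the k = 0 clause below. *)
Fixpoint gkp (C : numClosedFieldType) (a b c a' b' c' : C) (n k : nat) : C :=
  match n with
  | 0 => if k == 0%N then 1 else 0
  | m.+1 =>
    match k with
    | 0 => (a * m%:R + c) * gkp a b c a' b' c' m 0
    | j.+1 => (a * m%:R + b * j.+1%:R + c) * gkp a b c a' b' c' m j.+1
              + (a' * m%:R + b' * j%:R + c') * gkp a b c a' b' c' m j
    end
  end.

Definition rowpoly (C : numClosedFieldType) (T : nat -> nat -> C) (n : nat)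
  : {poly C} := \sum_(k < n.+1) T n k *: 'X^k.

(* A formal power series in z with coefficients in C[t] is represented by
   its sequence of (ordinary) coefficients: F n = coefficient of z^n. *)
Definition egf (C : numClosedFieldType) (T : nat -> nat -> C) : nat -> {poly C} :=
  fun n => (n`!%:R)^-1 *: rowpoly T n.

Definition dz (C : numClosedFieldType) (F : nat -> {poly C}) : nat -> {poly C} :=
  fun n => F n.+1 *+ n.+1.

Definition mulseries (C : numClosedFieldType) (p : {poly C}) (F : nat -> {poly C})
  : nat -> {poly C} := fun n => p * F n.

(* Main.v *)
Require Import Defs.
From HB Require Import structures.
From mathcomp Require Import all_boot all_order all_algebra.
From mathcomp Require Import ring.
Import Order.TTheory GRing.Theory Num.Theory.
Local Open Scope ring_scope.

Section S.
Variables (C : numClosedFieldType) (a b c a' b' c' : C).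

Notation T := (gkp a b c a' b' c').
Lemma g00 : T 0 0 = 1. Proof. by []. Qed.
Lemma g0S k : T 0 k.+1 = 0. Proof. by []. Qed.
Lemma gS0 m : T m.+1 0 = (a * m%:R + c) * T m 0. Proof. by []. Qed.
Lemma gSS m j : T m.+1 j.+1 = (a * m%:R + b * j.+1%:R + c) * T m j.+1
              + (a' * m%:R + b' * j%:R + c') * T m j. Proof. by []. Qed.
Lemma hS0 (x y z x' y' z' : C) m : gkp x y z x' y' z' m.+1 0 = (x * m%:R + z) * gkp x y z x' y' z' m 0. Proof. by []. Qed.
Lemma hSS (x y z x' y' z' : C) m j : gkp x y z x' y' z' m.+1 j.+1 = (x * m%:R + y * j.+1%:R + z) * gkp x y z x' y' z' m j.+1
              + (x' * m%:R + y' * j%:R + z') * gkp x y z x' y' z' m j. Proof. by []. Qed.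
Lemma h0 (x y z x' y' z' : C) k : gkp x y z x' y' z' 0 k = if k == 0%N then 1 else 0. Proof. by []. Qed.

Lemma left0 : c = 0 -> forall n, T n.+1 0 = 0.
Proof.
move=> c0; elim=> [|n IH]; first by rewrite gS0 g00 c0 mulr0 add0r mul0r.
by rewrite gS0 IH mulr0.
Qed.

Lemma left_trim : c = 0 -> c' != 0 -> forall n k,
  c'^-1 * T n.+1 k.+1 = gkp a b (a + b) a' b' (a' + b' + c') n k.
Proof.
move=> c0 c'0; elim=> [|n IH] k.
  case: k => [|k]; rewrite gSS.
    by rewrite g00 g0S c0 !mulr0 !add0r mulr1 mulVf.
  by rewrite !g0S !(mulr0, addr0) h0.
case: k => [|k].
  rewrite gSS left0 // mulr0 addr0 [RHS]hS0 -IH c0 -!natr1.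
  ring.
rewrite gSS [RHS]hSS -!IH c0 -!natr1.
ring.
Qed.

Lemma hz : forall m k, (m < k)%N -> T m k = 0.
Proof.
elim=> [|m IHm] k hk.
  by case: k hk => // k _; rewrite g0S.
case: k hk => // k hk.
by rewrite gSS (IHm k.+1) ?(IHm k) ?mulr0 ?addr0 // ltnW.
Qed.

Lemma diag0 : c' = 0 -> forall n, T n.+1 n.+1 = 0.
Proof.
move=> c0; elim=> [|n IH].
  by rewrite gSS g00 g0S c0 !(mulr0, mul0r, addr0, add0r).
by rewrite gSS IH hz // !mulr0 addr0.
Qed.

Lemma right_trim : c' = 0 -> c != 0 -> forall n k,
  c^-1 * T n.+1 k = gkp a b (a + c) a' b' a' n k.
Proof.
move=> c0 cn0; elim=> [|n IH] k.
  case: k => [|k].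
    by rewrite gS0 g00 mulr0 add0r mulr1 mulVf.
  rewrite gSS g0S c0 mulr0 add0r h0.
  by case: k => [|k]; rewrite ?g00 ?g0S !mulr0 ?add0r ?addr0 ?mul0r ?mulr0.
case: k => [|k].
  rewrite gS0 [RHS]hS0 -IH -!natr1.
  ring.
rewrite gSS [RHS]hSS -!IH c0 -!natr1.
ring.
Qed.

Lemma fact_inv (n : nat) : ((n.+1)`!%:R : C)^-1 *+ n.+1 = (n`!%:R)^-1.
Proof.
have h1 : (n.+1%:R : C) != 0 by rewrite pnatr_eq0.
have h2 : (n`!%:R : C) != 0 by rewrite pnatr_eq0 -lt0n fact_gt0.
rewrite factS natrM -mulr_natr; field.
by rewrite h2 nat1r.
Qed.

End S.

Theorem mainTheorem1 (C : numClosedFieldType) (a b c a' b' c' : C) :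
  (* (i) left trimming *)
  (c = 0 -> c' != 0 ->
     let Tstar := fun n k : nat => c'^-1 * gkp a b c a' b' c' n.+1 k.+1 in
     (forall n k : nat, (k <= n)%N ->
        Tstar n k = gkp a b (a + b) a' b' (a' + b' + c') n k)
     /\
     (forall n : nat,
        mulseries 'X (egf Tstar) n = c'^-1 *: dz (egf (gkp a b c a' b' c')) n))
  /\
  (* (ii) right trimming *)
  (c' = 0 -> c != 0 ->
     let Tstar := fun n k : nat => c^-1 * gkp a b c a' b' c' n.+1 k in
     (forall n k : nat, (k <= n)%N ->
        Tstar n k = gkp a b (a + c) a' b' a' n k)
     /\
     (forall n : nat,
        egf Tstar n = c^-1 *: dz (egf (gkp a b c a' b' c')) n)).
Proof.
split=> h1 h2 Tstar; split.
- by move=> n k _; rewrite /Tstar left_trim.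
- move=> n; rewrite /mulseries /dz /egf scalerMnl fact_inv /rowpoly.
  rewrite [in RHS]big_ord_recl (@left0 C a b c a' b' c' h1 n) scale0r add0r.
  rewrite -scalerAr scalerA [_ * _^-1]mulrC -scalerA; congr (_ *: _).
  rewrite mulr_sumr scaler_sumr; apply: eq_bigr => i _.
  by rewrite /Tstar -scalerAr scalerA -exprS.
- by move=> n k _; rewrite /Tstar right_trim.
- move=> n; rewrite /dz /egf scalerMnl fact_inv /rowpoly.
  rewrite [in RHS]big_ord_recr (@diag0 C a b c a' b' c' h1 n) scale0r /= addr0.
  rewrite scalerA [_ * _^-1]mulrC -scalerA; congr (_ *: _).
  by rewrite scaler_sumr; apply: eq_bigr => i _; rewrite /Tstar scalerA.
Qed.
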